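(* Let $H=(v_1,\dots,v_6)$ be an embedded equilateral hexagon, considered up to translations and rotations, whose action-angle coordinates $(d_1,d_2,d_3,\theta_1,\theta_2,\theta_3)$ for the $T_{135}$ triangulation are defined. If the Joint Chirality-Curl satisfies $J(H)=(1,-1)$ or $J(H)=(-1,-1)$, then $\theta_i\in(\pi,2\pi)$ for $i=1,2,3$.
   Context: An equilateral hexagon is an ordered 6-tuple $H=(v_1,\dots,v_6)$ in $\mathbb{R}^3$ with $\|v_i-v_{i+1}\|=1$ (indices mod 6), edges $e_i=[v_i,v_{i+1}]$, oriented $v_1\to v_2\to\cdots\to v_6\to v_1$; embedded means non-adjacent edges are disjoint and adjacent ones meet only at their common endpoint. Standard position: $v_1=0$, $v_3$ on the positive $x$-axis, $v_5$ in the $xy$-plane with positive $y$-coordinate. Action-angle coordinates ($T_{135}$ triangulation), defined when $v_1,v_3,v_5$ are not collinear and $0<d_i<2$: $d_1=\|v_3-v_1\|$, $d_2=\|v_5-v_3\|$, $d_3=\|v_1-v_5\|$; with $m_1,m_2,m_3$ the midpoints of $[v_1,v_3],[v_3,v_5],[v_5,v_1]$, $u_1,u_2,u_3$ the unit vectors in the $xy$-plane perpendicular to these segments pointing toward the opposite vertex of triangle $v_1v_3v_5$ (toward $v_5,v_1,v_3$ respectively), and $e_z=(0,0,1)$, the angles $\theta_i\in[0,2\pi)$ are determined by $v_{2i}=m_i+\tfrac12\sqrt{4-d_i^2}(\cos\theta_i\,u_i+\sin\theta_i\,e_z)$ (regular planar hexagon: all $\theta_i=\pi$). Joint Chirality-Curl: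 $curl(H)=\operatorname{sign}\big((v_3-v_1)\times(v_5-v_1)\cdot(v_2-v_1)\big)$. For $i=2,4,6$, $T_i$ is the open triangular disk with vertices $v_{i-1},v_i,v_{i+1}$, oriented by the right-hand rule (normal $(v_i-v_{i-1})\times(v_{i+1}-v_i)$), and $\Delta_i$ is the algebraic intersection number of $T_i$ with the oriented polygon $H$. Then $J(H)=(\Delta_2\Delta_4\Delta_6,\ \Delta_2^2\Delta_4^2\Delta_6^2\,curl(H))$. *)

(* Defs.v *)
From Stdlib Require Import Reals Lra Lia Classical ClassicalEpsilon.
Open Scope R_scope.

Record vec := mkv { vx : R; vy : R; vz : R }.

Definition vadd (a b : vec) : vec := mkv (vx a + vx b) (vy a + vy b) (vz a + vz b).
Definition vsub (a b : vec) : vec := mkv (vx a - vx b) (vy a - vy b) (vz a - vz b).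
Definition vscale (k : R) (a : vec) : vec := mkv (k * vx a) (k * vy a) (k * vz a).
Definition dot (a b : vec) : R := vx a * vx b + vy a * vy b + vz a * vz b.
Definition cross (a b : vec) : vec :=
  mkv (vy a * vz b - vz a * vy b) (vz a * vx b - vx a * vz b) (vx a * vy b - vy a * vx b).
Definition vnorm (a : vec) : R := sqrt (dot a a).
Definition vzero : vec := mkv 0 0 0.
Definition ez : vec := mkv 0 0 1.
Definition midpoint (a b : vec) : vec := vscale (1/2) (vadd a b).

Definition sgn (x : R) : R :=
  if Rlt_dec 0 x then 1 else if Rlt_dec x 0 then -1 else 0.

Definition ind (P : Prop) : R :=
  if excluded_middle_informative P then 1 else 0.

Record hexagon := mkhex { hv1 : vec; hv2 : vec; hv3 : vec; hv4 : vec; hv5 : vec; hv6 : vec }.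

(* vertex v_k, indices taken mod 6 (v_0 = v_6, v_7 = v_1, ...) *)
Definition vert (H : hexagon) (k : nat) : vec :=
  match (k mod 6)%nat with
  | 1%nat => hv1 H | 2%nat => hv2 H | 3%nat => hv3 H
  | 4%nat => hv4 H | 5%nat => hv5 H | _ => hv6 H
  end.

Definition equilateral (H : hexagon) : Prop :=
  forall i : nat, (1 <= i <= 6)%nat -> vnorm (vsub (vert H i) (vert H (i + 1))) = 1.

Definition in_seg (p a b : vec) : Prop :=
  exists t, 0 <= t <= 1 /\ p = vadd a (vscale t (vsub b a)).

(* edges e_i = [v_i, v_{i+1}] and e_j are non-adjacent (and distinct) *)
Definition nonadjacent (i j : nat) : Prop :=
  (i mod 6 <> j mod 6)%nat /\ ((i + 1) mod 6 <> j mod 6)%nat /\ ((j + 1) mod 6 <> i mod 6)%nat.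

Definition embedded (H : hexagon) : Prop :=
  (forall i j : nat, (1 <= i <= 6)%nat -> (1 <= j <= 6)%nat -> nonadjacent i j ->
     forall p, in_seg p (vert H i) (vert H (i + 1)) ->
               ~ in_seg p (vert H j) (vert H (j + 1)))
  /\
  (forall i : nat, (1 <= i <= 6)%nat ->
     forall p, in_seg p (vert H i) (vert H (i + 1)) ->
               in_seg p (vert H (i + 1)) (vert H (i + 2)) ->
               p = vert H (i + 1)).

Definition standard_position (H : hexagon) : Prop :=
  hv1 H = vzero /\
  vx (hv3 H) > 0 /\ vy (hv3 H) = 0 /\ vz (hv3 H) = 0 /\
  vz (hv5 H) = 0 /\ vy (hv5 H) > 0.

Definition diag (H : hexagon) (i : nat) : R :=
  vnorm (vsub (vert H (2 * i + 1)) (vert H (2 * i - 1))).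

Definition collinear (a b c : vec) : Prop := cross (vsub b a) (vsub c a) = vzero.

Definition aa_defined (H : hexagon) : Prop :=
  ~ collinear (hv1 H) (hv3 H) (hv5 H) /\
  forall i : nat, (1 <= i <= 3)%nat -> 0 < diag H i < 2.

Definition is_perp_unit (p q o u : vec) : Prop :=
  vz u = 0 /\ dot u u = 1 /\ dot u (vsub q p) = 0 /\ dot u (vsub o (midpoint p q)) > 0.

Definition is_u (H : hexagon) (i : nat) (u : vec) : Prop :=
  is_perp_unit (vert H (2 * i - 1)) (vert H (2 * i + 1)) (vert H (2 * i + 3)) u.

Definition is_angle (H : hexagon) (i : nat) (u : vec) (theta : R) : Prop :=
  0 <= theta < 2 * PI /\
  vert H (2 * i) =
    vadd (midpoint (vert H (2 * i - 1)) (vert H (2 * i + 1)))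
         (vscale (1/2 * sqrt (4 - (diag H i)^2))
                 (vadd (vscale (cos theta) u) (vscale (sin theta) ez))).

Definition curl (H : hexagon) : R :=
  sgn (dot (cross (vsub (hv3 H) (hv1 H)) (vsub (hv5 H) (hv1 H))) (vsub (hv2 H) (hv1 H))).

Definition in_open_tri (p a b c : vec) : Prop :=
  exists al be ga, 0 < al /\ 0 < be /\ 0 < ga /\ al + be + ga = 1 /\
    p = vadd (vscale al a) (vadd (vscale be b) (vscale ga c)).

(* Local contribution of the oriented edge [a,b] to the algebraic intersection
   number with the open triangle T = (x,y,z) oriented by the normal
   n = (y - x) x (z - y).  A transversal crossing in the interior of the edge counts
   sign(n . (b - a)); a crossing at an endpoint of the edge counts half of it
   (so that a crossing through a vertex of H, shared by two edges, counts once, and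
   a touching at a vertex counts 0).  Non-transversal edges contribute 0. *)
Definition edge_int (x y z a b : vec) : R :=
  let n := cross (vsub y x) (vsub z y) in
  sgn (dot n (vsub b a)) *
  ( ind (exists t, 0 < t < 1 /\ in_open_tri (vadd a (vscale t (vsub b a))) x y z)
  + 1/2 * ind (in_open_tri a x y z) + 1/2 * ind (in_open_tri b x y z)).

(* Delta_i : algebraic intersection number of T_i = (v_{i-1}, v_i, v_{i+1})
   with the oriented polygon H (sum over the edges e_1..e_6) *)
Definition Delta (H : hexagon) (i : nat) : R :=
  let x := vert H (i + 5) in let y := vert H i in let z := vert H (i + 1) in
  edge_int x y z (hv1 H) (hv2 H) + edge_int x y z (hv2 H) (hv3 H) +
  edge_int x y z (hv3 H) (hv4 H) + edge_int x y z (hv4 H) (hv5 H) +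
  edge_int x y z (hv5 H) (hv6 H) + edge_int x y z (hv6 H) (hv1 H).

Definition JCC (H : hexagon) : R * R :=
  (Delta H 2 * Delta H 4 * Delta H 6,
   (Delta H 2)^2 * (Delta H 4)^2 * (Delta H 6)^2 * curl H).

(* Main.v *)
From Stdlib Require Import Reals Lra Lia Classical ClassicalEpsilon.
Require Import Defs.
Open Scope R_scope.

Definition nrm (x y z : vec) : vec := cross (vsub y x) (vsub z y).

Lemma sgn0 : sgn 0 = 0.
Proof. unfold sgn; destruct (Rlt_dec 0 0); [lra|]; destruct (Rlt_dec 0 0); lra. Qed.

Lemma sgn_pair a b : (0 < a -> b < 0) -> (a < 0 -> 0 < b) -> (a = 0 -> b = 0) ->
  sgn a + sgn b = 0.
Proof.
  intros h1 h2 h3. unfold sgn.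
  destruct (Rtotal_order a 0) as [h|[h|h]].
  - specialize (h2 h). destruct (Rlt_dec 0 a); [lra|]. destruct (Rlt_dec a 0); [|lra].
    destruct (Rlt_dec 0 b); [lra|lra].
  - specialize (h3 h). subst. destruct (Rlt_dec 0 0); [lra|]. destruct (Rlt_dec 0 0); [lra|].
    lra.
  - specialize (h1 h). destruct (Rlt_dec 0 a); [|lra].
    destruct (Rlt_dec 0 b); [lra|]. destruct (Rlt_dec b 0); lra.
Qed.

Lemma ind_false (P : Prop) : ~ P -> ind P = 0.
Proof. intros h. unfold ind. destruct (excluded_middle_informative P); tauto. Qed.

Lemma edge_int_eq x y z a b : edge_int x y z a b =
  sgn (dot (nrm x y z) (vsub b a)) *
  ( ind (exists t, 0 < t < 1 /\ in_open_tri (vadd a (vscale t (vsub b a))) x y z)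
  + 1/2 * ind (in_open_tri a x y z) + 1/2 * ind (in_open_tri b x y z)).
Proof. reflexivity. Qed.

Lemma edge_int_zero x y z a b :
  ~ (exists t, 0 < t < 1 /\ in_open_tri (vadd a (vscale t (vsub b a))) x y z) ->
  ~ in_open_tri a x y z -> ~ in_open_tri b x y z -> edge_int x y z a b = 0.
Proof.
  intros h1 h2 h3. rewrite edge_int_eq, (ind_false _ h1), (ind_false _ h2), (ind_false _ h3).
  ring.
Qed.

Lemma edge_int_dot0 x y z a b : dot (nrm x y z) (vsub b a) = 0 -> edge_int x y z a b = 0.
Proof. intros h. rewrite edge_int_eq, h, sgn0. ring. Qed.

Lemma side1 x y z : edge_int x y z x y = 0.
Proof. apply edge_int_dot0. destruct x, y, z; unfold nrm, dot, cross, vsub; simpl; ring. Qed.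

Lemma side2 x y z : edge_int x y z y z = 0.
Proof. apply edge_int_dot0. destruct x, y, z; unfold nrm, dot, cross, vsub; simpl; ring. Qed.

Lemma open_vz p x y z : in_open_tri p x y z -> vz x = 0 -> vz z = 0 ->
  exists be, 0 < be /\ vz p = be * vz y.
Proof.
  intros [al [be [ga [h1 [h2 [h3 [h4 hp]]]]]]] hx hz. exists be. split; auto.
  rewrite hp. simpl. rewrite hx, hz. ring.
Qed.

Lemma open_plane p x y z : in_open_tri p x y z -> dot (nrm x y z) (vsub p x) = 0.
Proof.
  intros [al [be [ga [h1 [h2 [h3 [h4 hp]]]]]]]. subst p.
  replace al with (1 - be - ga) by lra.
  destruct x, y, z; unfold nrm, dot, cross, vsub, vadd, vscale; simpl; ring.
Qed.

Lemma dot_seg n a b x t : dot n (vsub (vadd a (vscale t (vsub b a))) x)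
  = dot n (vsub a x) + t * dot n (vsub b a).
Proof. destruct n, a, b, x; unfold dot, vsub, vadd, vscale; simpl; ring. Qed.

Lemma dot_sub3 n a b x : dot n (vsub b a) = dot n (vsub b x) - dot n (vsub a x).
Proof. destruct n, a, b, x; unfold dot, vsub; simpl; ring. Qed.

Lemma edge_vert_a x y z a b : dot (nrm x y z) (vsub a x) = 0 -> ~ in_open_tri a x y z ->
  edge_int x y z a b = 0.
Proof.
  intros ha hna.
  destruct (Req_dec (dot (nrm x y z) (vsub b a)) 0) as [e|ne].
  - apply edge_int_dot0; auto.
  - apply edge_int_zero; auto.
    + intros [t [ht ho]]. apply open_plane in ho. rewrite dot_seg, ha in ho.
      apply ne. nra.
    + intros hb. apply open_plane in hb. apply ne. rewrite (dot_sub3 _ a b x). lra.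
Qed.

Lemma edge_vert_b x y z a b : dot (nrm x y z) (vsub b x) = 0 -> ~ in_open_tri b x y z ->
  edge_int x y z a b = 0.
Proof.
  intros hb hnb.
  destruct (Req_dec (dot (nrm x y z) (vsub b a)) 0) as [e|ne].
  - apply edge_int_dot0; auto.
  - apply edge_int_zero; auto.
    + intros [t [ht ho]]. apply open_plane in ho. rewrite dot_seg in ho.
      rewrite (dot_sub3 _ a b x) in ho, ne. apply ne. nra.
    + intros ha. apply open_plane in ha. apply ne. rewrite (dot_sub3 _ a b x). lra.
Qed.

Lemma nrm_z x y z : dot (nrm x y z) (vsub z x) = 0.
Proof. destruct x, y, z; unfold nrm, dot, cross, vsub; simpl; ring. Qed.

Lemma nrm_x x y z : dot (nrm x y z) (vsub x x) = 0.
Proof. destruct x, y, z; unfold nrm, dot, cross, vsub; simpl; ring. Qed.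

Lemma not_open_h p x y z : vz x = 0 -> vz z = 0 -> vz y <> 0 -> vz p = 0 ->
  ~ in_open_tri p x y z.
Proof.
  intros hx hz hy hp ho. destruct (open_vz _ _ _ _ ho hx hz) as [be [hb e]].
  rewrite hp in e. apply hy. nra.
Qed.

Lemma edge_below x y z a b : vz x = 0 -> vz z = 0 -> vz y < 0 -> 0 <= vz a -> 0 <= vz b ->
  edge_int x y z a b = 0.
Proof.
  intros hx hz hy ha hb.
  assert (K : forall p, 0 <= vz p -> ~ in_open_tri p x y z).
  { intros p hp ho. destruct (open_vz _ _ _ _ ho hx hz) as [be [hbe e]]. nra. }
  apply edge_int_zero; auto.
  intros [t [ht ho]]. refine (K _ _ ho). simpl. nra.
Qed.

Lemma edge_above x y z a b : vz x = 0 -> vz z = 0 -> 0 < vz y -> vz a <= 0 -> vz b <= 0 ->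
  edge_int x y z a b = 0.
Proof.
  intros hx hz hy ha hb.
  assert (K : forall p, vz p <= 0 -> ~ in_open_tri p x y z).
  { intros p hp ho. destruct (open_vz _ _ _ _ ho hx hz) as [be [hbe e]]. nra. }
  apply edge_int_zero; auto.
  intros [t [ht ho]]. refine (K _ _ ho). simpl. nra.
Qed.

Lemma planar_pair x y z a c b : vz x = 0 -> vz y = 0 -> vz z = 0 -> vz c = 0 ->
  vz a < 0 -> vz b < 0 -> edge_int x y z a c + edge_int x y z c b = 0.
Proof.
  intros hx hy hz hc ha hb.
  assert (K : forall p, vz p <> 0 -> ~ in_open_tri p x y z).
  { intros p hp ho. destruct (open_vz _ _ _ _ ho hx hz) as [be [hbe e]].
    rewrite hy in e. lra. }
  rewrite !edge_int_eq.
  rewrite (ind_false (in_open_tri a x y z)) by (apply K; lra).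
  rewrite (ind_false (in_open_tri b x y z)) by (apply K; lra).
  rewrite (ind_false (exists t, 0 < t < 1 /\ in_open_tri (vadd a (vscale t (vsub c a))) x y z)).
  2:{ intros [t [ht ho]]. refine (K _ _ ho). simpl. rewrite hc. nra. }
  rewrite (ind_false (exists t, 0 < t < 1 /\ in_open_tri (vadd c (vscale t (vsub b c))) x y z)).
  2:{ intros [t [ht ho]]. refine (K _ _ ho). simpl. rewrite hc. nra. }
  set (N := vz (nrm x y z)).
  assert (HA : dot (nrm x y z) (vsub c a) = N * (- vz a)).
  { unfold N. destruct x, y, z, a, c; simpl in *; subst; unfold nrm, dot, cross, vsub; simpl; ring. }
  assert (HB : dot (nrm x y z) (vsub b c) = N * vz b).
  { unfold N. destruct x, y, z, b, c; simpl in *; subst; unfold nrm, dot, cross, vsub; simpl; ring. }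
  rewrite HA, HB.
  replace (sgn (N * - vz a) * (0 + 1 / 2 * 0 + 1 / 2 * ind (in_open_tri c x y z)) +
    sgn (N * vz b) * (0 + 1 / 2 * ind (in_open_tri c x y z) + 1 / 2 * 0))
    with (1/2 * ind (in_open_tri c x y z) * (sgn (N * - vz a) + sgn (N * vz b))) by ring.
  rewrite sgn_pair; [ring| | | ].
  - intros h. destruct (Rtotal_order N 0) as [n|[n|n]]; nra.
  - intros h. destruct (Rtotal_order N 0) as [n|[n|n]]; nra.
  - intros h. destruct (Rtotal_order N 0) as [n|[n|n]]; nra.
Qed.

Lemma open_x_n x y z : in_open_tri x x y z -> nrm x y z = vzero.
Proof.
  intros [al [be [ga [h1 [h2 [h3 [h4 hp]]]]]]].
  destruct x as [x1 x2 x3], y as [y1 y2 y3], z as [z1 z2 z3].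
  unfold vadd, vscale in hp. injection hp as e1 e2 e3.
  replace al with (1 - be - ga) in * by lra.
  assert (E1 : be * (y1 - x1) + ga * (z1 - x1) = 0) by lra.
  assert (E2 : be * (y2 - x2) + ga * (z2 - x2) = 0) by lra.
  assert (E3 : be * (y3 - x3) + ga * (z3 - x3) = 0) by lra.
  unfold nrm, cross, vsub, vzero; simpl.
  assert (K : forall w, be * w = 0 -> w = 0).
  { intros w hw. apply Rmult_integral in hw. destruct hw; lra. }
  f_equal; apply K.
  - replace (be * ((y2 - x2) * (z3 - y3) - (y3 - x3) * (z2 - y2))) with
      ((be * (y2 - x2) + ga * (z2 - x2)) * (z3 - x3) - (be * (y3 - x3) + ga * (z3 - x3)) * (z2 - x2)) by ring.
    rewrite E2, E3. ring.
  - replace (be * ((y3 - x3) * (z1 - y1) - (y1 - x1) * (z3 - y3))) with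
      ((be * (y3 - x3) + ga * (z3 - x3)) * (z1 - x1) - (be * (y1 - x1) + ga * (z1 - x1)) * (z3 - x3)) by ring.
    rewrite E1, E3. ring.
  - replace (be * ((y1 - x1) * (z2 - y2) - (y2 - x2) * (z1 - y1))) with
      ((be * (y1 - x1) + ga * (z1 - x1)) * (z2 - x2) - (be * (y2 - x2) + ga * (z2 - x2)) * (z1 - x1)) by ring.
    rewrite E1, E2. ring.
Qed.

Lemma open_z_n x y z : in_open_tri z x y z -> nrm x y z = vzero.
Proof.
  intros [al [be [ga [h1 [h2 [h3 [h4 hp]]]]]]].
  destruct x as [x1 x2 x3], y as [y1 y2 y3], z as [z1 z2 z3].
  unfold vadd, vscale in hp. injection hp as e1 e2 e3.
  replace ga with (1 - be - al) in * by lra.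
  assert (E1 : al * (x1 - z1) + be * (y1 - z1) = 0) by lra.
  assert (E2 : al * (x2 - z2) + be * (y2 - z2) = 0) by lra.
  assert (E3 : al * (x3 - z3) + be * (y3 - z3) = 0) by lra.
  unfold nrm, cross, vsub, vzero; simpl.
  assert (K : forall w, al * w = 0 -> w = 0).
  { intros w hw. apply Rmult_integral in hw. destruct hw; lra. }
  f_equal; apply K.
  - replace (al * ((y2 - x2) * (z3 - y3) - (y3 - x3) * (z2 - y2))) with
      ((al * (x2 - z2) + be * (y2 - z2)) * (y3 - z3) - (al * (x3 - z3) + be * (y3 - z3)) * (y2 - z2)) by ring.
    rewrite E2, E3. ring.
  - replace (al * ((y3 - x3) * (z1 - y1) - (y1 - x1) * (z3 - y3))) with
      ((al * (x3 - z3) + be * (y3 - z3)) * (y1 - z1) - (al * (x1 - z1) + be * (y1 - z1)) * (y3 - z3)) by ring.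
    rewrite E1, E3. ring.
  - replace (al * ((y1 - x1) * (z2 - y2) - (y2 - x2) * (z1 - y1))) with
      ((al * (x1 - z1) + be * (y1 - z1)) * (y2 - z2) - (al * (x2 - z2) + be * (y2 - z2)) * (y1 - z1)) by ring.
    rewrite E1, E2. ring.
Qed.

Lemma dot_zero_l w : dot vzero w = 0.
Proof. unfold dot, vzero; simpl; ring. Qed.

Lemma Delta_eq2 H : Delta H 2 =
  edge_int (hv1 H) (hv2 H) (hv3 H) (hv1 H) (hv2 H) + edge_int (hv1 H) (hv2 H) (hv3 H) (hv2 H) (hv3 H) +
  edge_int (hv1 H) (hv2 H) (hv3 H) (hv3 H) (hv4 H) + edge_int (hv1 H) (hv2 H) (hv3 H) (hv4 H) (hv5 H) +
  edge_int (hv1 H) (hv2 H) (hv3 H) (hv5 H) (hv6 H) + edge_int (hv1 H) (hv2 H) (hv3 H) (hv6 H) (hv1 H).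
Proof. reflexivity. Qed.
Lemma Delta_eq4 H : Delta H 4 =
  edge_int (hv3 H) (hv4 H) (hv5 H) (hv1 H) (hv2 H) + edge_int (hv3 H) (hv4 H) (hv5 H) (hv2 H) (hv3 H) +
  edge_int (hv3 H) (hv4 H) (hv5 H) (hv3 H) (hv4 H) + edge_int (hv3 H) (hv4 H) (hv5 H) (hv4 H) (hv5 H) +
  edge_int (hv3 H) (hv4 H) (hv5 H) (hv5 H) (hv6 H) + edge_int (hv3 H) (hv4 H) (hv5 H) (hv6 H) (hv1 H).
Proof. reflexivity. Qed.
Lemma Delta_eq6 H : Delta H 6 =
  edge_int (hv5 H) (hv6 H) (hv1 H) (hv1 H) (hv2 H) + edge_int (hv5 H) (hv6 H) (hv1 H) (hv2 H) (hv3 H) +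
  edge_int (hv5 H) (hv6 H) (hv1 H) (hv3 H) (hv4 H) + edge_int (hv5 H) (hv6 H) (hv1 H) (hv4 H) (hv5 H) +
  edge_int (hv5 H) (hv6 H) (hv1 H) (hv5 H) (hv6 H) + edge_int (hv5 H) (hv6 H) (hv1 H) (hv6 H) (hv1 H).
Proof. reflexivity. Qed.

Lemma main_z (v1 v2 v3 v4 v5 v6 : vec) :
  let H := mkhex v1 v2 v3 v4 v5 v6 in
  vz v1 = 0 -> vz v3 = 0 -> vz v5 = 0 -> vz v2 < 0 ->
  Delta H 2 <> 0 -> Delta H 4 <> 0 -> Delta H 6 <> 0 -> vz v4 < 0 /\ vz v6 < 0.
Proof.
  intros H z1 z3 z5 z2 D2 D4 D6.
  rewrite Delta_eq2 in D2. rewrite Delta_eq4 in D4. rewrite Delta_eq6 in D6.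
  unfold H in *; simpl in D2, D4, D6.
  assert (A : vz v4 < 0 \/ vz v6 < 0).
  { destruct (Rlt_dec (vz v4) 0); auto. destruct (Rlt_dec (vz v6) 0); auto.
    exfalso; apply D2.
    rewrite side1, side2.
    rewrite (edge_vert_a _ _ _ v3 v4 (nrm_z _ _ _)) by (apply not_open_h; lra).
    rewrite (edge_below _ _ _ v4 v5) by lra.
    rewrite (edge_below _ _ _ v5 v6) by lra.
    rewrite (edge_vert_b _ _ _ v6 v1 (nrm_x _ _ _)) by (apply not_open_h; lra).
    ring. }
  destruct (Rlt_dec (vz v4) 0) as [h4|h4]; destruct (Rlt_dec (vz v6) 0) as [h6|h6];
    [auto| | |lra]; exfalso.
  -
    apply D6. destruct (Rtotal_order (vz v6) 0) as [n|[n|n]]; [lra| |].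
    + destruct (classic (nrm v5 v6 v1 = vzero)) as [e|ne].
      { repeat rewrite (edge_int_dot0 v5 v6 v1) by (rewrite e; apply dot_zero_l). ring. }
      rewrite side1, side2.
      rewrite (edge_vert_a _ _ _ v1 v2 (nrm_z _ _ _)) by (intro o; apply ne; apply open_z_n; exact o).
      rewrite (edge_vert_b _ _ _ v4 v5 (nrm_x _ _ _)) by (intro o; apply ne; apply open_x_n; exact o).
      replace (0 + edge_int v5 v6 v1 v2 v3 + edge_int v5 v6 v1 v3 v4 + 0 + 0 + 0)
        with (edge_int v5 v6 v1 v2 v3 + edge_int v5 v6 v1 v3 v4) by ring.
      apply planar_pair; lra.
    + rewrite side1, side2.
      repeat rewrite (edge_above v5 v6 v1) by lra. ring.
  -
    apply D4. destruct (Rtotal_order (vz v4) 0) as [n|[n|n]]; [lra| |].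
    + destruct (classic (nrm v3 v4 v5 = vzero)) as [e|ne].
      { repeat rewrite (edge_int_dot0 v3 v4 v5) by (rewrite e; apply dot_zero_l). ring. }
      rewrite side1, side2.
      rewrite (edge_vert_b _ _ _ v2 v3 (nrm_x _ _ _)) by (intro o; apply ne; apply open_x_n; exact o).
      rewrite (edge_vert_a _ _ _ v5 v6 (nrm_z _ _ _)) by (intro o; apply ne; apply open_z_n; exact o).
      replace (edge_int v3 v4 v5 v1 v2 + 0 + 0 + 0 + 0 + edge_int v3 v4 v5 v6 v1)
        with (edge_int v3 v4 v5 v6 v1 + edge_int v3 v4 v5 v1 v2) by ring.
      apply planar_pair; lra.
    + rewrite side1, side2.
      repeat rewrite (edge_above v3 v4 v5) by lra. ring.
Qed.

Lemma sgn_cases x : (sgn x = 1 /\ 0 < x) \/ (sgn x = -1 /\ x < 0) \/ (sgn x = 0 /\ x = 0).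
Proof.
  unfold sgn. destruct (Rlt_dec 0 x); [left; split; auto|].
  destruct (Rlt_dec x 0); [right; left; split; auto|right; right; split; auto; lra].
Qed.

Theorem mainTheorem3 (H : hexagon) :
  equilateral H -> embedded H -> standard_position H -> aa_defined H ->
  (JCC H = (1, -1) \/ JCC H = (-1, -1)) ->
  forall (i : nat) (u : vec) (theta : R),
    (1 <= i <= 3)%nat -> is_u H i u -> is_angle H i u theta ->
    PI < theta < 2 * PI.
Proof.
  intros _ _ Hsp Haa HJ i u theta Hi Hu Ha.
  assert (HJ2 : (Delta H 2)^2 * (Delta H 4)^2 * (Delta H 6)^2 * curl H = -1).
  { destruct HJ as [e|e]; unfold JCC in e; injection e; auto. }
  assert (Hc : curl H = -1 /\ Delta H 2 <> 0 /\ Delta H 4 <> 0 /\ Delta H 6 <> 0).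
  { assert (P : 0 <= (Delta H 2)^2 * (Delta H 4)^2 * (Delta H 6)^2).
    { apply Rmult_le_pos; [apply Rmult_le_pos|]; apply pow2_ge_0. }
    unfold curl in HJ2 |- *.
    destruct (sgn_cases (dot (cross (vsub (hv3 H) (hv1 H)) (vsub (hv5 H) (hv1 H))) (vsub (hv2 H) (hv1 H))))
      as [[s _]|[[s _]|[s _]]]; rewrite s in HJ2 |- *; [nra| |nra].
    split; auto. repeat split; intro e; rewrite e in HJ2; lra. }
  destruct Hc as [Hcurl [D2 [D4 D6]]].
  destruct H as [v1 v2 v3 v4 v5 v6].
  destruct Hsp as [e1 [p3 [y3 [z3 [z5 y5]]]]]. simpl in *.
  assert (z1 : vz v1 = 0) by (rewrite e1; reflexivity).
  assert (z2 : vz v2 < 0).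
  { unfold curl in Hcurl. simpl in Hcurl.
    destruct (sgn_cases (dot (cross (vsub v3 v1) (vsub v5 v1)) (vsub v2 v1)))
      as [[s h]|[[s h]|[s h]]]; rewrite s in Hcurl; try lra.
    subst v1. destruct v3 as [a b c], v5 as [d f g], v2 as [k l m].
    unfold dot, cross, vsub, vzero in h; simpl in *. subst. ring_simplify in h. destruct (Rlt_dec m 0) as [q|q]; auto. exfalso. assert (0 <= a * f) by nra. nra. }
  destruct (main_z v1 v2 v3 v4 v5 v6 z1 z3 z5 z2 D2 D4 D6) as [z4 z6].
  set (H := mkhex v1 v2 v3 v4 v5 v6) in *.
  assert (K : vz (vert H (2 * i - 1)) = 0 /\ vz (vert H (2 * i + 1)) = 0 /\ vz (vert H (2 * i)) < 0).
  { destruct i as [|[|[|[|i]]]]; try lia; simpl; auto. }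
  destruct K as [ka [kb kc]].
  destruct Ha as [[t0 t1] E].
  destruct Hu as [uz _].
  destruct Haa as [_ Hd]. specialize (Hd i Hi).
  rewrite E in kc. unfold midpoint, vadd, vscale, ez in kc. cbn [vz] in kc. rewrite ka, kb, uz in kc.
  assert (Hs : 0 < sqrt (4 - diag H i ^ 2)).
  { apply sqrt_lt_R0. nra. }
  assert (sn : sin theta < 0) by nra.
  split; [|lra].
  destruct (Rle_dec theta PI) as [l|l]; [|lra].
  pose proof (sin_ge_0 theta t0 l). lra.
Qed.
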